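(* Let $(\mathcal{S}^x,G)$ be a finite elation generalized quadrangle of order $(s,t)$ with $s>t$, and suppose $st$ is a power of the prime $p$. Let $a\in G\setminus\{\mathrm{id}\}$ be such that every point fixed by $a$ lies on some line $L_a$ through $x$, and suppose that $\alpha(a)$, where $\alpha(a)+1$ is the number of points of $L_a$ fixed by $a$, is a power of $p$. Let $f(a)$ be the number of lines not incident with $x$ fixed by $a$. Then: (i) $f(a)\neq 0$; (ii) if $f(a)$ is also a power of $p$, then $\alpha(a)/f(a)=(s/t)^{o(a)}$ for some even integer $o(a)$.
   Context: A finite generalized quadrangle (GQ) of order $(s,t)$: every line has $s+1$ points, every point is on $t+1$ lines, two points are on at most one common line, and for each point $p$ not on a line $L$ there is a unique point of $L$ collinear with $p$. An elation generalized quadrangle $(\mathcal{S}^x,G)$: $G\le\mathrm{Aut}(\mathcal{S})$ fixes every line through $x$ and acts sharply transitively on the points not collinear with $x$. *)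

(* Defs.v *)
From HB Require Import structures.
From mathcomp Require Import all_boot all_order all_algebra all_fingroup.
Set Implicit Arguments. Unset Strict Implicit. Unset Printing Implicit Defensive.

Definition collinear (P L : finType) (I : P -> L -> bool) (y z : P) : bool :=
  [exists l, I y l && I z l].

Definition is_GQ (P L : finType) (I : P -> L -> bool) (s t : nat) : Prop :=
  [/\ (forall l : L, #|[set y | I y l]| = s + 1),
      (forall y : P, #|[set l | I y l]| = t + 1),
      (forall y z : P, y != z -> #|[set l | I y l && I z l]| <= 1) &
      (forall (y : P) (l : L), ~~ I y l ->
          #|[set z | I z l && collinear I y z]| = 1)].

Definition is_automorphism (P L : finType) (I : P -> L -> bool)
  (g : {perm P} * {perm L}) : Prop :=
  forall (y : P) (l : L), I (g.1 y) (g.2 l) = I y l.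

Definition is_elation_GQ (P L : finType) (I : P -> L -> bool) (x : P)
  (G : {group ({perm P} * {perm L})}) : Prop :=
  [/\ (forall g, g \in G -> is_automorphism I g),
      (forall g l, g \in G -> I x l -> g.2 l = l) &
      (forall y z : P, ~~ collinear I x y -> ~~ collinear I x z ->
         exists! g, g \in G /\ g.1 y = z)].

Definition is_power_of (p n : nat) : Prop := exists k : nat, n = p ^ k.

(* Main.v *)
Require Import Defs.
From HB Require Import structures.
From mathcomp Require Import all_boot all_order all_algebra all_fingroup.
From mathcomp Require Import algC algnum.
From mathcomp Require Import zify ring.
Set Implicit Arguments. Unset Strict Implicit. Unset Printing Implicit Defensive.
Import Order.TTheory GRing.Theory Num.Theory.

Lemma card_sum_bool (T : finType) (B : {pred T}) (c : pred T) :
  #|[set l in B | c l]| = \sum_(l in B) c l.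
Proof.
rewrite -sum1_card big_mkcond /= [RHS]big_mkcond /=.
by apply: eq_bigr => l _; rewrite inE; case: (l \in B); case: (c l).
Qed.

Lemma dcount (T U : finType) (A : {pred T}) (B : {pred U}) (R : T -> U -> bool) :
  \sum_(y in A) #|[set l in B | R y l]| = \sum_(l in B) #|[set y in A | R y l]|.
Proof.
under eq_bigr do rewrite card_sum_bool.
rewrite exchange_big /=; apply: eq_bigr => l _.
by rewrite card_sum_bool.
Qed.

Lemma sum_delta (T : finType) (f : T -> nat) y : \sum_z (y == z) * f z = f y.
Proof.
rewrite (bigD1 y) //= eqxx mul1n big1 ?addn0 // => z /negPf.
by rewrite eq_sym => ->.
Qed.

Section GQ.
Variables (P L : finType) (I : P -> L -> bool) (s t : nat).
Hypothesis HG : is_GQ I s t.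

Local Notation col := (collinear I).

Lemma pts_card l : #|[set y | I y l]| = s + 1.
Proof. by case: HG. Qed.
Lemma lines_card y : #|[set l | I y l]| = t + 1.
Proof. by case: HG. Qed.

Lemma uniq_line y z l m : y != z -> I y l -> I z l -> I y m -> I z m -> l = m.
Proof.
move=> yz yl zl ym zm; case: HG => _ _ H3 _.
have := H3 _ _ yz; move/card_le1P => /(_ l); rewrite inE yl zl => /(_ isT m).
by rewrite !inE ym zm => /esym/eqP.
Qed.

Lemma proj_uniq y l z1 z2 : ~~ I y l -> I z1 l -> col y z1 -> I z2 l -> col y z2 ->
  z1 = z2.
Proof.
move=> yl z1l c1 z2l c2; case: HG => _ _ _ /(_ _ _ yl) H4.
have : #|[set z | I z l && col y z]| <= 1 by rewrite H4.
move/card_le1P => /(_ z1); rewrite inE z1l c1 => /(_ isT z2).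
by rewrite !inE z2l c2 => /esym/eqP.
Qed.

Lemma proj_ex y l : ~~ I y l -> exists z, I z l && col y z.
Proof.
move=> yl; case: HG => _ _ _ /(_ _ _ yl) /eqP /cards1P [z Hz].
by exists z; have := set11 z; rewrite -Hz inE.
Qed.

Lemma line_ex y : exists l, I y l.
Proof.
have : 0 < #|[set l | I y l]| by rewrite lines_card addn1.
by case/card_gt0P => l; rewrite inE; exists l.
Qed.

Lemma col_refl y : col y y.
Proof. by case: (line_ex y) => l yl; apply/existsP; exists l; rewrite yl. Qed.

Lemma col_sym y z : col y z = col z y.
Proof. by apply/existsP/existsP => -[l /andP[? ?]]; exists l; apply/andP. Qed.

Lemma colP y z : reflect (exists l, I y l /\ I z l) (col y z).
Proof. by apply: (iffP existsP) => -[l H]; exists l; [case/andP: H|apply/andP]. Qed.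

Lemma line_col y z l : I y l -> I z l -> col y z.
Proof. by move=> ? ?; apply/colP; exists l. Qed.

Definition nbr y := [set z | (z != y) && col y z].

Lemma one_line y z : z != y -> col y z -> #|[set l | I y l && I z l]| = 1.
Proof.
move=> zy /colP [l [yl zl]]; apply: (@eq_card1 _ l) => m.
rewrite !inE; apply/idP/eqP => [/andP[ym zm]|->]; last by rewrite yl zl.
by apply: (uniq_line zy) => //.
Qed.

Lemma card_nbr y : #|nbr y| = s * (t + 1).
Proof.
have E1 : \sum_(z in nbr y) #|[set l in [set l | I y l] | I z l]| = #|nbr y|.
  rewrite -sum1_card; apply: eq_bigr => z; rewrite inE => /andP[zy c].
  rewrite -(one_line zy c); apply: eq_card => l; by rewrite !inE.
rewrite -E1 dcount.
transitivity (\sum_(l in [set l | I y l]) s); last by rewrite sum_nat_const lines_card mulnC.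
apply: eq_bigr => l; rewrite inE => yl.
have -> : [set z in nbr y | I z l] = [set z | I z l] :\ y.
  apply/setP => z; rewrite !inE; apply/andP/andP => [[/andP[zy _] zl]|[zy zl]].
    by [].
  by rewrite zy (line_col yl zl).
by have := cardsD1 y [set z | I z l]; rewrite pts_card inE yl; lia.
Qed.

Lemma card_common_col y w : y != w -> col y w ->
  #|[set z | (z != y) && (z != w) && col y z && col z w]| = s - 1.
Proof.
move=> yw /colP [m [ym wm]].
have -> : [set z | (z != y) && (z != w) && col y z && col z w] = [set z | I z m] :\ y :\ w.
  apply/setP => z; rewrite !inE; apply/idP/idP.
    case/andP => /andP[/andP[-> ->] cy] cw /=.
    apply/negPn/negP => zm.
    have := proj_uniq zm ym _ wm _; rewrite (col_sym z y) cy cw => /(_ isT isT) /eqP.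
    by rewrite (negPf yw).
  case/andP => zw /andP [zy zm]; rewrite zw zy /=.
  by rewrite (line_col ym zm) (line_col zm wm).
have := cardsD1 w ([set z | I z m] :\ y); rewrite !inE eq_sym yw wm /=.
have := cardsD1 y [set z | I z m]; rewrite !inE ym pts_card; lia.
Qed.

Lemma card_common_ncol y w : ~~ col y w ->
  #|[set z | col y z && col z w]| = t + 1.
Proof.
move=> nyw.
set S := [set z | col y z && col z w].
have E1 : \sum_(z in S) #|[set l in [set l | I y l] | I z l]| = #|S|.
  rewrite -sum1_card; apply: eq_bigr => z; rewrite inE => /andP[c cw].
  have zy : z != y by apply/eqP => zy; rewrite -zy cw in nyw.
  rewrite -(one_line zy c); apply: eq_card => l; by rewrite !inE.
rewrite -E1 dcount.
transitivity (\sum_(l in [set l | I y l]) 1); last by rewrite sum1_card lines_card.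
apply: eq_bigr => l; rewrite inE => yl.
have wl : ~~ I w l by apply/negP => wl; rewrite (line_col yl wl) in nyw.
case: HG => _ _ _ /(_ _ _ wl) <-; apply: eq_card => z; rewrite !inE.
apply/andP/andP => [[/andP[_ c] zl]|[zl c]]; first by rewrite col_sym.
by rewrite (line_col yl zl) col_sym.
Qed.

Lemma card_setb (c : pred P) : #|[set z | c z]| = \sum_z c z.
Proof. by rewrite -sum1_card big_mkcond /=; apply: eq_bigr => z _; rewrite inE; case: (c z). Qed.

Definition Aadj y z := (y != z) && col y z.
Definition cn y z := Aadj y z + (t + 1) * (y == z).

Lemma cn_sym y z : cn y z = cn z y.
Proof. by rewrite /cn /Aadj eq_sym col_sym. Qed.

Lemma Crow y : \sum_z cn y z = (s + 1) * (t + 1).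
Proof.
rewrite big_split /= -big_distrr /=.
have -> : \sum_z (y == z) = 1.
  by have := sum_delta (fun _ => 1) y; under eq_bigr do rewrite muln1.
rewrite -card_setb.
have -> : [set z | Aadj y z] = nbr y by apply/setP => z; rewrite !inE /Aadj eq_sym.
rewrite card_nbr; lia.
Qed.

Hypothesis s0 : 0 < s.

Lemma Csq y w : \sum_z cn y z * cn z w = (s + t) * cn y w + (t + 1).
Proof.
have E z : cn y z * cn z w = Aadj y z * Aadj z w + (t+1) * ((y == z) * Aadj z w)
   + (t+1) * ((z == w) * Aadj y z) + (t+1) * (t+1) * ((y == z) * (z == w)).
  rewrite /cn; set a := Aadj y z; set b := Aadj z w; set c := (y == z) : nat;
  set d := (z == w) : nat; nia.
under eq_bigr do rewrite E.
rewrite !big_split /= -!big_distrr /= !sum_delta.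
have -> : \sum_z (z == w) * Aadj y z = Aadj y w.
  by rewrite -(sum_delta (Aadj y) w); apply: eq_bigr => z _; rewrite eq_sym.
under eq_bigr do rewrite mulnb.
rewrite -card_setb /cn.
have [<-|yw] := eqVneq y w.
  have -> : [set z | Aadj y z && Aadj z y] = nbr y.
    by apply/setP => z; rewrite !inE /Aadj eq_sym col_sym andbb.
  rewrite card_nbr /Aadj eqxx /=; nia.
case cyw: (col y w).
  have -> : [set z | Aadj y z && Aadj z w] =
     [set z | (z != y) && (z != w) && col y z && col z w].
    by apply/setP => z; rewrite !inE /Aadj eq_sym; case: (z != y); case: (z != w); case: (col y z).
  rewrite card_common_col // /Aadj yw cyw /=; lia.
have -> : [set z | Aadj y z && Aadj z w] = [set z | col y z && col z w].
  apply/setP => z; rewrite !inE /Aadj.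
  case cyz: (col y z); case czw: (col z w); rewrite ?andbF //=.
  rewrite !andbT; apply/andP; split; apply/eqP.
    by move=> yz; rewrite yz czw in cyw.
  by move=> zw; rewrite -zw cyz in cyw.
rewrite card_common_ncol ?cyw // /Aadj cyw /=; rewrite (negPf yw); lia.
Qed.

End GQ.
Section Comb.
Variables (P L : finType) (I : P -> L -> bool) (s t : nat) (x : P)
  (G : {group ({perm P} * {perm L})}) (a : {perm P} * {perm L}) (La : L).
Hypotheses (HG : is_GQ I s t) (HE : is_elation_GQ I x G) (aG : a \in G)
  (xLa : I x La) (fixLa : forall y : P, a.1 y = y -> I y La).

Local Notation col := (collinear I).
Local Notation sg := a.1.

Lemma autI y l : I (sg y) (a.2 l) = I y l.
Proof. by case: HE => H1 _ _; apply: H1. Qed.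

Lemma fixx l : I x l -> a.2 l = l.
Proof. by case: HE => _ H2 _; apply: H2. Qed.

Lemma col_inv y z : col (sg y) (sg z) = col y z.
Proof.
apply/colP/colP => -[l [yl zl]].
  by exists ((a.2)^-1 l)%g; rewrite -(autI y) -(autI z) permKV.
by exists (a.2 l); rewrite !autI.
Qed.

Lemma Aadj_inv y z : Aadj I (sg y) (sg z) = Aadj I y z.
Proof. by rewrite /Aadj col_inv (inj_eq perm_inj). Qed.

Lemma cn_invk k y z : cn I t ((sg ^+ k)%g y) ((sg ^+ k)%g z) = cn I t y z.
Proof.
elim: k => [|k IH]; first by rewrite expg0 !perm1.
rewrite expgSr !permM /cn Aadj_inv (inj_eq perm_inj).
by move: IH; rewrite /cn (inj_eq perm_inj).
Qed.

Lemma colx_inv y : col x (sg y) = col x y.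
Proof.
apply/colP/colP => -[l [xl yl]]; exists l; split => //.
  by rewrite -(autI y) fixx.
by rewrite -(fixx xl) autI.
Qed.

Definition Xs := [set y | col x y].
Definition Fx := [set y | sg y == y].
Definition Fl := [set l | ~~ I x l & a.2 l == l].
Definition Ys := [set y | ~~ col x y & Aadj I (sg y) y].

Lemma card_Xs : #|Xs| = (1 + s * (t + 1))%N.
Proof.
rewrite (cardsD1 x) inE (col_refl HG) /=; congr (_ + _)%N.
rewrite -(card_nbr HG x); apply: eq_card => y; rewrite !inE.
by rewrite andbC.
Qed.

Lemma Fx_sub : Fx \subset Xs.
Proof.
apply/subsetP => y; rewrite !inE => /eqP /fixLa yLa.
exact: line_col xLa yLa.
Qed.

Lemma Y_line y : y \in Ys -> exists l, [/\ l \in Fl, I y l & I (sg y) l].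
Proof.
rewrite inE => /andP[nxy /andP[syy /colP[l [syl yl]]]].
have xl : ~~ I x l by apply/negP => xl; rewrite (line_col xl yl) in nxy.
exists l; split => //; rewrite inE xl /=; apply/eqP.
have [z /andP[zl /colP[N [xN zN]]]] := proj_ex HG xl.
have zN' : I (sg z) N by rewrite -(fixx xN) autI.
have nsy : ~~ col x (sg y) by rewrite colx_inv.
have [e|ne] := eqVneq (sg z) z.
  have zsy : z != sg y.
    by apply/eqP => zs; rewrite -zs (line_col xN zN) in nsy.
  apply: (uniq_line HG zsy) => //; first by rewrite -{1}e autI.
  by rewrite autI.
exfalso; move/eqP: ne; apply.
have syN : ~~ I (sg y) N by apply/negP => syN; rewrite (line_col xN syN) in nsy.
apply: (proj_uniq HG syN zN' _ zN (line_col syl zl)).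
by apply: (line_col (l := a.2 l)); rewrite autI.
Qed.

Lemma card_Ys : #|Ys| = (s * #|Fl|)%N.
Proof.
have E1 : (\sum_(y in Ys) #|[set l in Fl | I y l]|)%N = #|Ys|.
  rewrite -sum1_card; apply: eq_bigr => y yY.
  have [l [lF yl syl]] := Y_line yY.
  apply: (@eq_card1 _ l) => m; rewrite !inE; apply/idP/eqP => [|->]; last first.
    by move: lF; rewrite inE => ->.
  case/andP => /andP [xm /eqP am] ym.
  move: yY; rewrite inE => /andP[_ /andP[syy _]].
  apply: (uniq_line HG (y := sg y) (z := y)) => //.
  by rewrite -am autI.
rewrite -E1 dcount.
transitivity (\sum_(l in Fl) s)%N; last by rewrite sum_nat_const mulnC.
apply: eq_bigr => l; rewrite inE => /andP[xl /eqP al].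
have := cardsID Xs [set y | I y l]; rewrite (pts_card HG) => E.
have E2 : #|[set y | I y l] :&: Xs| = 1%N.
  case: HG => _ _ _ /(_ _ _ xl) <-; apply: eq_card => z; rewrite !inE.
  by rewrite col_sym.
have E3 : [set y in Ys | I y l] = [set y | I y l] :\: Xs.
  apply/setP => y; rewrite !inE; apply/andP/andP => [[/andP[nxy _] yl]|[nxy yl]].
    by [].
  split => //; rewrite nxy /= /Aadj.
  have -> : col (sg y) y by apply: (line_col (l := l)) => //; rewrite -al autI.
  rewrite andbT; apply/eqP => /fixLa yLa.
  by rewrite (line_col xLa yLa) in nxy.
rewrite E3; lia.
Qed.

Lemma f1_count :
  #|[set y | Aadj I (sg y) y]| = (#|Xs| - #|Fx| + s * #|Fl|)%N.
Proof.
rewrite -(cardsID Xs) -card_Ys.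
have -> : [set y | Aadj I (sg y) y] :&: Xs = Xs :\: Fx.
  apply/setP => y; rewrite !inE.
  case xy: (col x y); rewrite ?andbF ?andbT //= /Aadj eq_sym.
  have [l [xl yl]] : exists l, I x l /\ I y l by apply/colP.
  suff -> : col (sg y) y by rewrite andbT.
  by apply: (line_col (l := l)) => //; rewrite -(fixx xl) autI.
have -> : [set y | Aadj I (sg y) y] :\: Xs = Ys.
  by apply/setP => y; rewrite !inE andbC.
rewrite cardsD (setIidPr Fx_sub); congr (_ + _)%N.
Qed.

End Comb.
Lemma NT1 p c e : prime p -> 0 < c -> p ^ c + 1 %| 1 + p ^ e -> e %% c.*2 = c.
Proof.
move=> pp c0 hd; have p1 := prime_gt1 pp.
set D := p ^ c + 1.
have Xc : 0 < p ^ c by rewrite expn_gt0 ltnW.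
have D1 : 1 < D by rewrite /D; (timeout 10 lia).
have H2 : p ^ c.*2 %% D = 1.
  have -> : p ^ c.*2 = (p ^ c - 1) * D + 1.
    rewrite -addnn expnD /D; set X := p ^ c; (timeout 10 nia).
  by rewrite modnMDl modn_small.
set r := e %% c.*2.
have He : p ^ e %% D = p ^ r %% D.
  rewrite {1}(divn_eq e c.*2) expnD (mulnC (e %/ c.*2)) expnM -modnMml -modnXm H2 exp1n.
  by rewrite (modn_small D1) mul1n.
have hr : D %| 1 + p ^ r by rewrite /dvdn -modnDmr -He modnDmr.
have rlt : r < c.*2 by rewrite ltn_pmod // double_gt0.
clearbody r.
case: (ltnP r c) => hrc.
  have : p ^ r < p ^ c by rewrite ltn_exp2l.
  have := dvdn_leq (isT : 0 < 1 + p ^ r) hr; rewrite /D; (timeout 10 lia).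
set r' := r - c.
have Er : p ^ r = p ^ c * p ^ r' by rewrite -expnD subnKC.
have rc : r' < c by rewrite /r'; move: hrc rlt; rewrite -addnn; clear; lia.
have yl : p ^ r' < p ^ c by rewrite ltn_exp2l.
set y := p ^ r' in Er yl.
have hy : y %% D = 1.
  have E1 : 1 + p ^ r + y = y * D + 1 by rewrite Er /D; (timeout 10 nia).
  have := congr1 (modn^~ D) E1; rewrite /= modnMDl (modn_small D1).
  by rewrite -modnDml (eqP hr) add0n.
have y1 : y = 1 by rewrite -hy modn_small // /D; (timeout 10 lia).
have r0 : r' = 0.
  by apply/eqP; rewrite -(eqn_exp2l _ _ p1) expn0 -/y y1.
rewrite -/r; move: r0 hrc; rewrite /r'; clear; lia.
Qed.

Lemma NT_core p c u w : prime p -> 0 < c -> p ^ c + 1 %| p ^ u + p ^ c * w ->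
  w != 0 /\ (forall v, w = p ^ v -> u %% c.*2 = v %% c.*2).
Proof.
move=> pp c0 hd; have p1 := prime_gt1 pp.
set D := p ^ c + 1 in hd *.
have D1 : 1 < D by rewrite /D addn1 ltnS expn_gt0 ltnW.
have coD : coprime D p.
  rewrite -coprime_modl /D; case: c c0 {hd D D1} => // c' _.
  by rewrite expnS mulnC modnMDl (modn_small p1) coprime1n.
have coDu k : coprime D (p ^ k) by apply: coprimeXr.
split.
  apply/eqP => w0; move: hd; rewrite w0 muln0 addn0 -[p ^ u]muln1.
  rewrite (Gauss_dvdr _ (coDu u)) dvdn1 => /eqP D1'.
  by rewrite D1' in D1.
move=> v wv; move: hd; rewrite wv -expnD => hd.
case: (leqP u (c + v)) => h.
  have E : p ^ u + p ^ (c + v) = p ^ u * (1 + p ^ (c + v - u)).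
    by rewrite mulnDr muln1 -expnD subnKC.
  rewrite E (Gauss_dvdr _ (coDu u)) in hd.
  have He := NT1 pp c0 hd.
  have := divn_eq (c + v - u) c.*2; rewrite He; move: (_ %/ _) => q HQ.
  suff -> : v = q * c.*2 + u by rewrite modnMDl.
  move: HQ h; move: (q * c.*2) => Q; clear; lia.
have E : p ^ u + p ^ (c + v) = p ^ (c + v) * (1 + p ^ (u - (c + v))).
  by rewrite mulnDr muln1 -expnD subnKC ?(ltnW h) // addnC.
rewrite E (Gauss_dvdr _ (coDu _)) in hd.
have He := NT1 pp c0 hd.
have := divn_eq (u - (c + v)) c.*2; rewrite He; move: (_ %/ _) => q HQ.
suff -> : u = (q + 1) * c.*2 + v by rewrite modnMDl.
rewrite mulnDl mul1n; move: HQ h; move: (q * c.*2) => Q; rewrite -addnn; clear; lia.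
Qed.

Local Open Scope ring_scope.
Local Open Scope ring_scope.

Section MX.
Variable T : finType.
Definition mxT (f : T -> T -> algC) : 'M[algC]_#|T| :=
  \matrix_(i, j) f (enum_val i) (enum_val j).

Lemma sumT (F : T -> algC) : \sum_(k < #|T|) F (enum_val k) = \sum_z F z.
Proof. by rewrite (big_enum_val (A := T)). Qed.

Lemma mxTM f g : mxT f *m mxT g = mxT (fun y w => \sum_z f y z * g z w).
Proof.
apply/matrixP => i j; rewrite !mxE.
rewrite -(sumT (fun z => f (enum_val i) z * g z (enum_val j))).
by apply: eq_bigr => k _; rewrite !mxE.
Qed.

Lemma mxT_tr f : \tr (mxT f) = \sum_z f z z.
Proof. rewrite /mxtrace -sumT; apply: eq_bigr => k _; by rewrite mxE. Qed.

Lemma mxT_ext f g : (forall y w, f y w = g y w) -> mxT f = mxT g.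
Proof. by move=> H; apply/matrixP => i j; rewrite !mxE H. Qed.

Lemma sum_deltaC (F : T -> algC) y : \sum_z (y == z)%:R * F z = F y.
Proof.
rewrite (bigD1 y) //= eqxx mul1r big1 ?addr0 // => z /negPf.
by rewrite eq_sym => ->; rewrite mul0r.
Qed.

Lemma sum_deltaC' (F : T -> algC) y : \sum_z F z * (z == y)%:R = F y.
Proof.
rewrite -[RHS](sum_deltaC F); apply: eq_bigr => z _; by rewrite mulrC eq_sym.
Qed.
End MX.
Lemma trace_Aint n (Z : 'M[algC]_n) N : (0 < N)%N ->
  (forall v : 'rV_n, iter N.+1 (fun u => u *m Z) v = v *m Z) -> \tr Z \in Aint.
Proof.
move=> N0 H.
case: n Z H => [|n] Z H; first by rewrite /mxtrace big_ord0.
have [r Hr] := closed_field_poly_normal (char_poly Z).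
rewrite (monicP (char_poly_monic Z)) scale1r in Hr.
have sz : size r = n.+1.
  by have := size_char_poly Z; rewrite Hr size_prod_XsubC => -[].
have -> : \tr Z = \sum_(z <- r) z.
  apply: oppr_inj; rewrite -char_poly_trace // Hr -coefPn_prod_XsubC ?sz //.
rewrite big_seq; apply: rpred_sum => z zr.
have : eigenvalue Z z by rewrite eigenvalue_root_char Hr root_prod_XsubC.
move=> /eigenvalueP [v vZ v0].
have iv k : iter k (fun u => u *m Z) v = z ^+ k *: v.
  elim: k => [|k IH]; first by rewrite scale1r.
  by rewrite iterS IH -scalemxAl vZ scalerA exprSr.
have := H v; rewrite iv vZ => /eqP; rewrite -subr_eq0 -scalerBl scaler_eq0 (negPf v0) orbF subr_eq0 => /eqP e.
have [->|z0] := eqVneq z 0; first exact: Aint0.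
apply: (Aint_unity_root N0); rewrite unity_rootE; apply/eqP.
by apply: (mulIf z0); rewrite mul1r -exprSr.
Qed.
Section Alg.
Variables (P L : finType) (I : P -> L -> bool) (s t : nat) (x : P)
  (G : {group ({perm P} * {perm L})}) (a : {perm P} * {perm L}) (La : L).
Hypotheses (HG : is_GQ I s t) (HE : is_elation_GQ I x G) (aG : a \in G)
  (xLa : I x La) (fixLa : forall y : P, a.1 y = y -> I y La) (s0 : (0 < s)%N).

Local Open Scope ring_scope.
Local Notation sg := a.1.

Definition Cv (y w : P) : algC := (cn I t y w)%:R.
Let m : algC := (s + t)%:R.
Let lam : algC := ((s + 1) * (t + 1))%:R.
Let nu : algC := #|P|%:R.
Let c : algC := (t + 1)%:R / (s * t + 1)%:R.

Lemma S1r y : \sum_z Cv y z = lam.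
Proof. by rewrite -natr_sum (Crow HG). Qed.

Lemma S1c w : \sum_z Cv z w = lam.
Proof. by rewrite -(S1r w); apply: eq_bigr => z _; rewrite /Cv cn_sym. Qed.

Lemma S2 y w : \sum_z Cv y z * Cv z w = m * Cv y w + (t + 1)%:R.
Proof.
rewrite /Cv; under eq_bigr do rewrite -natrM.
by rewrite -natr_sum (Csq HG s0) natrD natrM.
Qed.

Lemma nuE : nu = ((s + 1) * (s * t + 1))%:R.
Proof.
have E : lam * lam = m * lam + (t + 1)%:R * nu.
  have : \sum_w (\sum_z Cv x z * Cv z w) = \sum_w (m * Cv x w + (t + 1)%:R).
    by apply: eq_bigr => w _; apply: S2.
  rewrite exchange_big /=.
  under eq_bigr do rewrite -mulr_sumr S1r.
  rewrite -mulr_suml S1r big_split /= -mulr_sumr S1r sumr_const => ->.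
  by rewrite /nu mulr_natr mulr_natl.
move: E; rewrite /lam /m /nu -!natrM -natrD => /eqP; rewrite eqr_nat => /eqP E.
apply/eqP; rewrite eqr_nat; apply/eqP.
have : ((t + 1) * #|P| = (t + 1) * ((s + 1) * (s * t + 1)))%N by nia.
by move/eqP; rewrite eqn_mul2l addn1 /= => /eqP.
Qed.

Definition Ef (y w : P) : algC := m^-1 * (Cv y w - c).

Lemma m0 : m != 0. Proof. by rewrite /m pnatr_eq0 -lt0n addn_gt0 s0. Qed.
Lemma st0 : (s * t + 1)%:R != 0 :> algC. Proof. by rewrite pnatr_eq0 addn1. Qed.

Lemma EE y w : \sum_z Ef y z * Ef z w = Ef y w.
Proof.
have H z : Ef y z * Ef z w = m^-1 * m^-1 * (Cv y z * Cv z w)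
   - m^-1 * m^-1 * c * Cv y z - m^-1 * m^-1 * c * Cv z w + m^-1 * m^-1 * c * c.
  by rewrite /Ef; ring.
under eq_bigr do rewrite H.
rewrite !big_split /= ?sumrB ?sumrN -!mulr_sumr S2 S1r S1c sumr_const.
have nE := nuE; rewrite /nu in nE.
rewrite -[#|xpredT|]/#|P| -[_ *+ #|P|]mulr_natr nE.
rewrite /Ef /m /c /lam /Cv.
move: m0 st0; rewrite /m.
set Cyw := (cn I t y w)%:R.
rewrite !natrD !natrM => H1 H2.
by field; rewrite H1 H2.
Qed.

Definition Qk k (y z : P) : algC := ((sg ^+ k)%g y == z)%:R.
Definition Qm k := mxT (Qk k).
Definition Em := mxT Ef.
Definition Wk k := Qm k *m Em.

Lemma QmE k : Qm k *m Em = mxT (fun y w => Ef ((sg ^+ k)%g y) w).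
Proof. by rewrite mxTM; apply: mxT_ext => y w; rewrite sum_deltaC. Qed.

Lemma EmQ k : Em *m Qm k = mxT (fun y w => Ef y (((sg ^+ k)^-1)%g w)).
Proof.
rewrite mxTM; apply: mxT_ext => y w; rewrite -sum_deltaC'.
apply: eq_bigr => z _; rewrite /Qk.
have -> : ((sg ^+ k)%g z == w) = (z == ((sg ^+ k)^-1)%g w).
  by apply/eqP/eqP => [<-|->]; rewrite ?permK ?permKV.
by [].
Qed.

Lemma QEcomm k : Qm k *m Em = Em *m Qm k.
Proof.
rewrite QmE EmQ; apply: mxT_ext => y w; rewrite /Ef /Cv.
by rewrite -{1}[w](permKV (sg ^+ k)%g) (cn_invk t HE aG).
Qed.

Lemma EEm : Em *m Em = Em.
Proof. by rewrite mxTM; apply: mxT_ext => y w; apply: EE. Qed.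

Lemma QQ j k : Qm j *m Qm k = Qm (j + k).
Proof.
rewrite mxTM; apply: mxT_ext => y w; rewrite sum_deltaC /Qk.
by rewrite expgD permM.
Qed.

Lemma WW j k : Wk j *m Wk k = Wk (j + k).
Proof.
by rewrite /Wk mulmxA -(mulmxA (Qm j)) -QEcomm mulmxA QQ -mulmxA EEm.
Qed.

Lemma Qperiod : Qm (#[sg]%g).+1 = Qm 1.
Proof. by apply: mxT_ext => y w; rewrite /Qk expgSr expg_order mul1g expg1. Qed.

Lemma iterW k (v : 'rV[algC]_#|P|) : iter k.+1 (fun u : 'rV[algC]_#|P| => u *m Wk 1) v = v *m Wk k.+1.
Proof. by elim: k => [|k IH] //=; rewrite /= in IH; rewrite IH -mulmxA WW addn1. Qed.

Lemma trW_Aint : \tr (Wk 1) \in Aint.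
Proof.
apply: (@trace_Aint _ _ #[sg]%g) => [|v]; first exact: order_gt0.
by rewrite iterW /Wk Qperiod.
Qed.

Lemma trW : \tr (Wk 1) =
  m^-1 * ((\sum_y cn I t (sg y) y)%:R - ((s + 1) * (t + 1))%:R).
Proof.
rewrite /Wk QmE mxT_tr /=.
rewrite /Ef -mulr_sumr sumrB sumr_const natr_sum -[#|xpredT|]/#|P|.
have nE := nuE; rewrite /nu in nE.
rewrite -[_ *+ #|P|]mulr_natr nE /c; congr (_ * (_ - _)).
have := st0; rewrite !natrD !natrM => H; field; by rewrite H.
Qed.

End Alg.

Section Benson.
Variables (P L : finType) (I : P -> L -> bool) (s t : nat) (x : P)
  (G : {group ({perm P} * {perm L})}) (a : {perm P} * {perm L}) (La : L).
Hypotheses (HG : is_GQ I s t) (HE : is_elation_GQ I x G) (aG : a \in G)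
  (xLa : I x La) (fixLa : forall y : P, a.1 y = y -> I y La) (s0 : (0 < s)%N).

Local Open Scope ring_scope.

Lemma benson : (0 < #|Fx a|)%N ->
  (s + t %| t * (#|Fx a|).-1 + s * #|Fl I x a|)%N.
Proof.
move=> f00.
set K := (\sum_y cn I t (a.1 y) y)%N.
set K' := (t * (#|Fx a|).-1 + s * #|Fl I x a|)%N.
have KE : K = ((s + 1) * (t + 1) + K')%N.
  have -> : K = (#|[set y | Aadj I (a.1 y) y]| + (t + 1) * #|Fx a|)%N.
    rewrite /K big_split /= -big_distrr /= (card_setb (fun y => Aadj I (a.1 y) y)).
    by rewrite /Fx (card_setb (fun y => a.1 y == y)).
  rewrite (f1_count HG HE aG xLa fixLa) (card_Xs x HG).
  have := subset_leq_card (Fx_sub xLa fixLa); rewrite (card_Xs x HG) /K'.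
  nia.
have := trW_Aint HG HE aG xLa s0; rewrite (trW HG aG xLa s0) -/K KE.
rewrite (natrD _ ((s + 1) * (t + 1))) addrAC subrr add0r.
set z := _ * _ => zA.
have zQ : z \in Crat by rewrite /z rpredM ?rpredV ?rpred_nat.
have zZ := Cint_rat_Aint zQ zA.
have z0 : 0 <= z by rewrite /z mulr_ge0 ?invr_ge0 ?ler0n.
have : z \is a Num.nat by rewrite natrEint zZ z0.
case/natrP => q zq.
have : K'%:R = (s + t)%:R * q%:R :> algC.
  by rewrite -zq /z mulrA mulfV ?mul1r // pnatr_eq0 -lt0n addn_gt0 s0.
rewrite -natrM => /eqP; rewrite eqr_nat => /eqP ->.
exact: dvdn_mulr.
Qed.

End Benson.

Theorem mainTheorem10 (P L : finType) (I : P -> L -> bool) (s t : nat) (x : P)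
  (G : {group ({perm P} * {perm L})}) (p : nat)
  (a : {perm P} * {perm L}) (La : L) :
  is_GQ I s t -> is_elation_GQ I x G -> (t < s)%N ->
  prime p -> is_power_of p (s * t) ->
  a \in G -> a != 1%g ->
  I x La -> (forall y : P, a.1 y = y -> I y La) ->
  let alpha := (#|[set y | I y La & a.1 y == y]|).-1 in
  let f := #|[set l | ~~ I x l & a.2 l == l]| in
  is_power_of p alpha ->
  f <> 0%N /\
  (is_power_of p f ->
     exists o : int, (2 %| o)%Z /\
       (alpha%:R / f%:R : rat) = ((s%:R / t%:R : rat) ^ o)).
Proof.
move=> HG HE ts pp hst aG _ xLa fixLa alpha f [u hu].
have p1 := prime_gt1 pp.
have p0 : (0 < p)%N by apply: ltnW.
case: hst => k hk.
have st0 : (0 < s * t)%N by rewrite hk expn_gt0 p0.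
have s0 : (0 < s)%N by move: st0; rewrite muln_gt0 => /andP[].
have [i _ si] : exists2 i, (i <= k)%N & s = (p ^ i)%N.
  by apply/dvdn_pfactor => //; rewrite -hk dvdn_mulr.
have [j _ tj] : exists2 j, (j <= k)%N & t = (p ^ j)%N.
  by apply/dvdn_pfactor => //; rewrite -hk dvdn_mull.
have ji : (j < i)%N by rewrite -(ltn_exp2l _ _ p1) -si -tj.
have Fxe : #|[set y | I y La & a.1 y == y]| = #|Fx a|.
  apply: eq_card => y; rewrite !inE; apply/andP/idP => [[//]|ay].
  by split => //; apply: fixLa; apply/eqP.
have alE : alpha = (#|Fx a|).-1 by rewrite /alpha Fxe.
have f0 : (0 < #|Fx a|)%N.
  rewrite lt0n; apply/eqP => e; move: hu; rewrite alE e /= => /esym/eqP.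
  by rewrite expn_eq0 eqn0Ngt p0 //.
have B := benson HG HE aG xLa fixLa s0 f0.
rewrite -alE -/f hu in B.
set c := (i - j)%N.
have Epi : (p ^ i = p ^ j * p ^ c)%N by rewrite -expnD subnKC // ltnW.
have hd : (p ^ c + 1 %| p ^ u + p ^ c * f)%N.
  move: B; rewrite si tj Epi.
  have -> : (p ^ j * p ^ c + p ^ j = p ^ j * (p ^ c + 1))%N by rewrite mulnDr muln1.
  have -> : (p ^ j * p ^ u + p ^ j * p ^ c * f = p ^ j * (p ^ u + p ^ c * f))%N.
    by rewrite mulnDr mulnA.
  by rewrite dvdn_pmul2l // expn_gt0 p0.
have c0 : (0 < c)%N by rewrite subn_gt0.
have [fn0 Hv] := NT_core pp c0 hd.
split; first by apply/eqP.
move=> [v hv]; have Huv := Hv v hv.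
rewrite hu hv si tj Epi.
have pj0 : (p ^ j)%N%:R != 0 :> rat by rewrite pnatr_eq0 expn_eq0 eqn0Ngt p0 //.
have -> : ((p ^ j * p ^ c)%N%:R / (p ^ j)%N%:R : rat) = (p ^ c)%N%:R.
  by rewrite natrM mulrC mulKf.
case: (leqP v u) => hvu.
  have : (c.*2 %| u - v)%N by rewrite -eqn_mod_dvd // Huv.
  case/dvdnP => q hq.
  exists (q.*2)%:Z; split.
    by rewrite dvdzE /= -muln2 dvdn_mull.
  rewrite -exprnP -natrX -expnM.
  have -> : (p ^ u = p ^ v * p ^ (c * q.*2))%N.
    by rewrite -expnD; congr (_ ^ _)%N; move: hq hvu; rewrite -!muln2; clearbody c; clear -c; nia.
  rewrite natrM mulrAC mulfV ?mul1r // pnatr_eq0 expn_eq0 eqn0Ngt p0 //.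
have : (c.*2 %| v - u)%N by rewrite -(eqn_mod_dvd _ (ltnW hvu)) Huv.
case/dvdnP => q hq.
exists (- (q.*2)%:Z); split.
  by rewrite dvdzE abszN /= -muln2 dvdn_mull.
rewrite -exprnN -natrX -expnM.
have -> : (p ^ v = p ^ u * p ^ (c * q.*2))%N.
  by rewrite -expnD; congr (_ ^ _)%N; move: hq hvu; rewrite -!muln2; clearbody c; clear -c; nia.
have pu0 : (p ^ u)%N%:R != 0 :> rat by rewrite pnatr_eq0 expn_eq0 eqn0Ngt p0 //.
rewrite natrM invfM mulrA mulfV // mul1r.
first [reflexivity | (congr (_^-1); reflexivity) | (rewrite natrX; reflexivity)].
Qed.
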